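(* Let $K,L,F,Z,S$ be positive integers with $L\le K$, and suppose a $(K,L,F,Z,S)$ extended placement delivery array (EPDA) exists. Then for every positive integer $N$ there exists a $(K,L,M,N)$ multi-antenna coded caching scheme with $\frac{M}{N}=\frac{Z}{F}$ and subpacketization number $F$, in which the server can meet any demand vector $\mathbf{d}=(d_1,\dots,d_K)\in[N]^K$ with delivery time $T=\frac{S}{F}$.
   Context: Notation: $[n]=\{1,\dots,n\}$. EPDA: Let $K,L\ (\le K),F,Z,S$ be positive integers. An $F\times K$ array $\mathbf{A}=[a_{j,k}]$, $j\in[F]$, $k\in[K]$, whose entries are either a special symbol $\star$ or integers in $[S]$, is a $(K,L,F,Z,S)$ EPDA if: (C1) $\star$ appears exactly $Z$ times in each column; (C2) every integer in $[S]$ occurs at least once in $\mathbf{A}$; (C3) no integer appears more than once in any column; (C4) for each $s\in[S]$, let $\mathbf{A}^{(s)}$ be the subarray obtained by deleting all rows and all columns of $\mathbf{A}$ that do not contain $s$; then no row of $\mathbf{A}^{(s)}$ contains more than $L$ integer entries (of any value). $(K,L,M,N)$ multi-antenna coded caching system: a server holds $N$ files $W_1,\dots,W_N$, each of size one unit, and has $L$ transmit antennas; it serves $K$ single-antenna users over a MISO broadcast channel of capacity one file per unit time. User $k$ has a cache of size $M$ units ($0\le M\le N$). In the placement phase (before demands are known) the server fills caches with uncoded file content; $\mathcal{Z}_k$ denotes the content of cache $k$. In the delivery phase each user $k$ requests file $W_{d_k}$; the server sends vectors $\mathbf{x}(\tau)\in\mathbb{C}^L$, and user $k$ receives $y_k(\tau)=\mathbf{h}_k^T\mathbf{x}(\tau)+w_k(\tau)$,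 where $\mathbf{h}_k\in\mathbb{C}^L$ is user $k$'s channel vector; all nodes know all channel vectors perfectly, and the high-SNR regime is considered, i.e. the noise $w_k$ is neglected. A scheme is correct if each user $k$ can recover $W_{d_k}$ from $\mathcal{Z}_k$ and its received signals, for every demand vector. The subpacketization number is the number of equal-size subfiles into which each file is split; if each file is split into $F$ subfiles and the delivery consists of $S'$ transmissions each carrying (precoded combinations of) subfiles of size $1/F$, the delivery time is $T=S'/F$. The channel vectors are taken to be in general position (generic), so that for any set of at most $L-1$ users and a further user there is a vector in $\mathbb{C}^L$ orthogonal to the channels of the former but not of the latter. *)

(* Defs.v *)
From HB Require Import structures.
From mathcomp Require Import all_boot all_order all_algebra.
Set Implicit Arguments. Unset Strict Implicit. Unset Printing Implicit Defensive.
Import Order.TTheory GRing.Theory Num.Theory.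
Local Open Scope ring_scope.

(* An F x K array; entry [A j k] is [None] for the star symbol and          *)
(* [Some s] (s : 'I_S, representing the integer s+1 of [S]) otherwise.     *)
Definition EPDA (K L F Z S : nat) (A : 'I_F -> 'I_K -> option 'I_S) : Prop :=
  [/\
      (forall k : 'I_K, #|[set j : 'I_F | A j k == None]| = Z)%N,
      (forall s : 'I_S, exists j k, A j k = Some s),
      (forall (k : 'I_K) (j j' : 'I_F) (s : 'I_S),
          A j k = Some s -> A j' k = Some s -> j = j') &
      (* C4: in the subarray A^(s) (rows and columns containing s), every row
         has at most L integer entries *)
      (forall (s : 'I_S) (j : 'I_F), (exists k, A j k = Some s) ->
          #|[set k : 'I_K | [exists j' : 'I_F, A j' k == Some s]
                             && (A j k != None)]| <= L)%N].

(* Files W_1..W_N, each split into F subfiles; a subfile is a symbol of the *)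
(* field C (the same linear scheme is applied symbol-wise to packets).     *)

Definition dotC (C : fieldType) (L : nat) (h x : 'rV[C]_L) : C :=
  \sum_(i < L) h 0 i * x 0 i.

Definition general_position (C : fieldType) (K L : nat)
    (h : 'I_K -> 'rV[C]_L) : Prop :=
  forall (U : {set 'I_K}) (k : 'I_K), (#|U| <= L.-1)%N -> k \notin U ->
    exists v : 'rV[C]_L,
      (forall u, u \in U -> dotC (h u) v = 0) /\ dotC (h k) v != 0.

Definition transmit (C : fieldType) (N F S L : nat)
    (V : 'I_S -> 'I_N -> 'I_F -> 'rV[C]_L)
    (W : 'I_N -> 'I_F -> C) (t : 'I_S) : 'rV[C]_L :=
  \sum_(n < N) \sum_(j < F) W n j *: V t n j.

Definition cache_content (C : fieldType) (K N F : nat)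
    (Zc : 'I_K -> {set 'I_N * 'I_F}) (k : 'I_K)
    (W : 'I_N -> 'I_F -> C) : 'I_N * 'I_F -> C :=
  fun p => if p \in Zc k then W p.1 p.2 else 0.

Definition decodable (C : fieldType) (K L N F S : nat)
    (Zc : 'I_K -> {set 'I_N * 'I_F}) (h : 'I_K -> 'rV[C]_L)
    (V : 'I_S -> 'I_N -> 'I_F -> 'rV[C]_L) (k : 'I_K) (dk : 'I_N) : Prop :=
  forall j : 'I_F,
    exists dec : ('I_N * 'I_F -> C) -> ('I_S -> C) -> C,
      forall W : 'I_N -> 'I_F -> C,
        dec (cache_content Zc k W) (fun t => dotC (h k) (transmit V W t))
        = W dk j.

(* A (K,L,M,N) multi-antenna coded caching scheme with subpacketization F
   and S transmissions (of subfile size 1/F each) for every demand: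
   demand-independent uncoded placement respecting the cache size M
   (i.e. at most M*F subfiles of size 1/F), and, for generic channels and
   every demand vector d, a precoded delivery of S slots decodable by all. *)
Definition mc_scheme (C : fieldType) (K L N F : nat) (M : rat) (S : nat) : Prop :=
  exists Zc : 'I_K -> {set 'I_N * 'I_F},
    (forall k, (#|Zc k|%:R <= M * F%:R :> rat)) /\
    forall h : 'I_K -> 'rV[C]_L, general_position h ->
    forall d : 'I_K -> 'I_N,
      exists V : 'I_S -> 'I_N -> 'I_F -> 'rV[C]_L,
        forall k, decodable Zc h V k (d k).

Definition delivery_time (S F : nat) : rat := S%:R / F%:R.

(* Main.v *)
Require Import Defs.
From HB Require Import structures.
From mathcomp Require Import all_boot all_order all_algebra.
From Stdlib Require Import ClassicalEpsilon.
Import Order.TTheory GRing.Theory Num.Theory.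
Set Implicit Arguments. Unset Strict Implicit. Unset Printing Implicit Defensive.
Local Open Scope ring_scope.

Lemma dotC_sum (C : fieldType) L (h : 'rV[C]_L) (I : finType) (P : pred I)
  (f : I -> 'rV[C]_L) : dotC h (\sum_(i | P i) f i) = \sum_(i | P i) dotC h (f i).
Proof.
rewrite /dotC. under eq_bigr do rewrite summxE mulr_sumr. exact: exchange_big.
Qed.

Lemma dotCZ (C : fieldType) L (h x : 'rV[C]_L) a : dotC h (a *: x) = a * dotC h x.
Proof.
rewrite /dotC mulr_sumr; apply: eq_bigr => i _; rewrite mxE; exact: mulrCA.
Qed.

Lemma sum_pred1_cond (C : fieldType) (I : finType) (Q : pred I) (i : I) (f : I -> C) :
  \sum_(k | Q k && (k == i)) f k = if Q i then f i else 0.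
Proof.
case: ifP => Qi.
  by apply: big_pred1 => k /=; case: eqP => [->|]; rewrite ?Qi ?andbF ?andbT //.
by apply: big_pred0 => k /=; case: eqP => [->|]; rewrite ?Qi ?andbF ?andbT //.
Qed.

Lemma delivery (C : fieldType) K L N F S (A : 'I_F -> 'I_K -> option 'I_S)
  (C3 : forall (k : 'I_K) (j j' : 'I_F) (s : 'I_S),
          A j k = Some s -> A j' k = Some s -> j = j')
  (C4 : forall (s : 'I_S) (j : 'I_F), (exists k, A j k = Some s) ->
          (#|[set k : 'I_K | [exists j' : 'I_F, A j' k == Some s]
                             && (A j k != None)]| <= L)%N)
  (h : 'I_K -> 'rV[C]_L) (hgp : general_position h) (d : 'I_K -> 'I_N) :
  exists V : 'I_S -> 'I_N -> 'I_F -> 'rV[C]_L, forall k,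
    decodable (fun k => setX [set: 'I_N] [set j | A j k == None]) h V k (d k).
Proof.
pose U s k := [set u | (u != k) && [exists j', A j' u == Some s]
   && [exists j, (A j k == Some s) && (A j u != None)]].
have ex: forall s k, exists v : 'rV[C]_L, [exists j, A j k == Some s] ->
   (forall u, u \in U s k -> dotC (h u) v = 0) /\ dotC (h k) v != 0.
  move=> s k; case: (boolP [exists j, A j k == Some s]) => [/existsP[j /eqP Ajk]|_];
    last by exists 0.
  pose X := [set u | [exists j', A j' u == Some s] && (A j u != None)].
  have sub: U s k \subset X :\ k.
    apply/subsetP => u; rewrite !inE => /andP[/andP[uk ->] /existsP[j2 /andP[/eqP A2 Au]]].
    by rewrite uk -(C3 _ _ _ _ A2 Ajk) Au.
  have kin: k \in X.
    by rewrite inE; apply/andP; split; [apply/existsP; exists j; rewrite Ajk | rewrite Ajk].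
  have := C4 s j (ex_intro _ k Ajk); rewrite -/X (cardsD1 k X) kin => H.
  have [||v [v1 v2]] := hgp (U s k) k; last by exists v.
  - apply: leq_trans (subset_leq_card sub) _.
    by move: H; case: (L) => //= L' ; rewrite add1n ltnS.
  - by rewrite inE eqxx.
pose vv s k := proj1_sig (constructive_indefinite_description _ (ex s k)).
have vvP : forall s k, [exists j, A j k == Some s] ->
   (forall u, u \in U s k -> dotC (h u) (vv s k) = 0) /\ dotC (h k) (vv s k) != 0.
  by move=> s k; exact: (proj2_sig (constructive_indefinite_description _ (ex s k))).
exists (fun s n j => \sum_(k' | (A j k' == Some s) && (d k' == n)) vv s k').
move=> k j; case Ajk: (A j k) => [s|]; last first.
  exists (fun c r => c (d k, j)) => W.
  by rewrite /cache_content in_setX in_setT inE Ajk.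
have Ks : [exists j, A j k == Some s] by apply/existsP; exists j; rewrite Ajk.
have [zf nz] := vvP s k Ks.
exists (fun c r => (r s - \sum_(n < N) \sum_(j' < F)
   \sum_(k' | (A j' k' == Some s) && (d k' == n) && (k' != k))
     c (n, j') * dotC (h k) (vv s k')) / dotC (h k) (vv s k)) => W.
set c := fun k' => dotC (h k) (vv s k').
have R : dotC (h k) (transmit (fun s n j =>
      \sum_(k' | (A j k' == Some s) && (d k' == n)) vv s k') W s)
    = \sum_(n < N) \sum_(j' < F) \sum_(k' | (A j' k' == Some s) && (d k' == n))
        W n j' * c k'.
  rewrite /transmit dotC_sum; apply: eq_bigr => n _; rewrite dotC_sum.
  by apply: eq_bigr => j' _; rewrite dotCZ dotC_sum mulr_sumr.
rewrite R.
under eq_bigr => n _ do under eq_bigr => j' _ do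
  rewrite (bigID (fun k' => k' == k)) /= sum_pred1_cond.
under eq_bigr => n _ do rewrite big_split /=.
rewrite big_split /=.
have AE : forall j', (A j' k == Some s) = (j' == j).
  by move=> j'; apply/eqP/eqP => [H|->//]; exact: C3 _ _ _ _ H Ajk.
have X1 : forall n : 'I_N, \sum_(j' < F) (if (A j' k == Some s) && (d k == n)
     then W n j' * c k else 0) = if d k == n then W n j * c k else 0.
  move=> n; rewrite -big_mkcond.
  under eq_bigl => j' do rewrite AE andbC.
  exact: (sum_pred1_cond (fun _ => d k == n)).
under eq_bigr => n _ do rewrite X1.
rewrite -big_mkcond /=.
under eq_bigl => n do rewrite eq_sym.
rewrite big_pred1_eq.
have Y : forall (n : 'I_N) (j' : 'I_F) (k' : 'I_K),
    (A j' k' == Some s) && (d k' == n) && (k' != k) ->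
    W n j' * c k' = cache_content (fun k => setX [set: 'I_N] [set j | A j k == None]) k W (n, j') * c k'.
  move=> n j' k' /andP[/andP[/eqP A1 _] nk].
  rewrite /cache_content in_setX in_setT inE /=.
  case An: (A j' k) => [s'|] //.
  have Ks' : [exists j, A j k' == Some s] by apply/existsP; exists j'; rewrite A1.
  have kU : k \in U s k'.
    rewrite inE eq_sym nk Ks /=; apply/existsP; exists j'; by rewrite A1 An eqxx.
  by rewrite /c ((vvP s k' Ks').1 k kU) !mulr0.
under eq_bigr => n _ do under eq_bigr => j' _ do under eq_bigr => k' Hk' do rewrite (Y n j' k' Hk').
by rewrite addrK mulfK.
Qed.

Theorem theorem1 (C : numClosedFieldType) (K L F Z S : nat) :
  (0 < K)%N -> (0 < L)%N -> (0 < F)%N -> (0 < Z)%N -> (0 < S)%N ->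
  (L <= K)%N ->
  (exists A : 'I_F -> 'I_K -> option 'I_S, @EPDA K L F Z S A) ->
  forall N : nat, (0 < N)%N ->
    exists M : rat,
      [/\ 0 <= M <= N%:R,
          M / N%:R = Z%:R / F%:R &
          @mc_scheme C K L N F M S].
Proof.
move=> K0 L0 F0 Z0 S0 LK [A [C1 C2 C3 C4]] N N0.
have ZF : (Z <= F)%N.
  rewrite -(C1 (Ordinal K0)); apply: leq_trans (max_card _) _; by rewrite card_ord.
have Fn0 : (F%:R : rat) != 0 by rewrite pnatr_eq0 -lt0n.
have Nn0 : (N%:R : rat) != 0 by rewrite pnatr_eq0 -lt0n.
exists (N%:R * Z%:R / F%:R); split.
- apply/andP; split; first by rewrite divr_ge0 // mulr_ge0.
  rewrite ler_pdivrMr ?ltr0n // -!natrM ler_nat; exact: leq_mul.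
- by rewrite mulrAC [_ * N%:R^-1]mulrAC mulfV // mul1r.
- exists (fun k => setX [set: 'I_N] [set j | A j k == None]); split.
    by move=> k; rewrite cardsX cardsT card_ord C1 divfK // natrM.
  by move=> h hgp d; exact: delivery.
Qed.
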